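(* Let $\alpha=(\alpha_1,\dots,\alpha_k)$ be a composition of $r$ and let $m\ge k$. Then in $\mathcal{K}_+$, $$F_\alpha(u_1,u_2-u_1,\dots,u_m-u_{m-1})=\frac{q^{\mathrm{n}(\alpha)}}{[r]_q!}\,u_{[1+m-k,\,r+m-k]},$$ where $\mathrm{n}(\alpha)=\sum_{i=1}^k(i-1)\alpha_i$.
   Context: Let $\mathbf{k}$ be a field of characteristic zero and $q\in\mathbf{k}$ not a nontrivial root of unity; $[r]_q!=\prod_{i=1}^r(1+\dots+q^{i-1})$. The Klyachko algebra $\mathcal{K}$ is the commutative $\mathbf{k}$-algebra generated by $u_i$, $i\in\mathbb{Z}$, with relations $(q+1)u_i^2=qu_iu_{i-1}+u_iu_{i+1}$; $\mathcal{K}_+$ is its quotient by the ideal generated by the $u_i$, $i\le0$. $u_{[a,b]}=u_au_{a+1}\cdots u_b$. For a composition $\alpha$ of $r$ with $\mathrm{Set}(\alpha)=\{\alpha_1,\alpha_1+\alpha_2,\dots,\alpha_1+\dots+\alpha_{k-1}\}$, the fundamental quasisymmetric polynomial is $F_\alpha(x_1,\dots,x_m)=\sum x_{i_1}\cdots x_{i_r}$ over $1\le i_1\le\dots\le i_r\le m$ with $i_j<i_{j+1}$ whenever $j\in\mathrm{Set}(\alpha)$. *)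

(* Defs.v *)
From HB Require Import structures.
From mathcomp Require Import all_boot all_order all_algebra.
Set Implicit Arguments. Unset Strict Implicit. Unset Printing Implicit Defensive.
Import Order.TTheory GRing.Theory Num.Theory.
Local Open Scope ring_scope.

Definition qint (k : fieldType) (q : k) (i : nat) : k := \sum_(j < i) q ^+ j.
Definition qfact (k : fieldType) (q : k) (r : nat) : k := \prod_(i < r) qint q i.+1.

Definition is_composition (alpha : seq nat) : bool := all (fun a => 0 < a)%N alpha.

Definition compSet (alpha : seq nat) : seq nat :=
  [seq sumn (take i alpha) | i <- iota 1 (size alpha).-1].

Definition nstat (alpha : seq nat) : nat :=
  \sum_(i < size alpha) (i * nth 0 alpha i)%N.

(* Fundamental quasisymmetric polynomial F_alpha evaluated at x_1,...,x_m
   (x is 1-indexed: variable x_i is x i), r = sumn alpha.  The index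
   sequence i_1 <= ... <= i_r is encoded (0-indexed) by t : {ffun 'I_r -> 'I_m},
   with t j = i_(j+1) - 1. *)
Definition fundQS (R : comNzRingType) (alpha : seq nat) (m : nat) (x : nat -> R) : R :=
  \sum_(t : {ffun 'I_(sumn alpha) -> 'I_m} |
          [forall j : 'I_(sumn alpha), forall j' : 'I_(sumn alpha),
             (nat_of_ord j' == (nat_of_ord j).+1) ==>
               ((t j <= t j')%N && (((nat_of_ord j).+1 \in compSet alpha) ==> (t j < t j')%N))])
     \prod_(j < sumn alpha) x (t j).+1.

Definition klyachko_plus (k : fieldType) (q : k) (A : comAlgType k) (u : int -> A) : Prop :=
  (forall i : int, (q + 1) *: (u i ^+ 2) = q *: (u i * u (i - 1)) + u i * u (i + 1))
  /\ (forall i : int, i <= 0 -> u i = 0).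

Definition uint (R : comNzRingType) (u : int -> R) (a b : nat) : R :=
  \prod_(a <= j < b.+1) u (j%:Z).

Definition udiff (R : comNzRingType) (u : int -> R) (i : nat) : R :=
  if i == 1%N then u 1 else u (i%:Z) - u (i%:Z - 1).

(* Main.v *)
Require Import Defs.
From HB Require Import structures.
From mathcomp Require Import all_boot all_order all_algebra.
From mathcomp Require Import zify.
Import Order.TTheory GRing.Theory Num.Theory.
Set Implicit Arguments. Unset Strict Implicit.
Local Open Scope ring_scope.

Definition valid (r : nat) (S : seq nat) (M : nat) (t : {ffun 'I_r -> 'I_M}) : bool :=
  [forall j : 'I_r, forall j' : 'I_r,
     (nat_of_ord j' == (nat_of_ord j).+1) ==>
       ((t j <= t j')%N && (((nat_of_ord j).+1 \in S) ==> (t j < t j')%N))].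

Definition lastlt (r M : nat) (t : {ffun 'I_r -> 'I_M}) (b : nat) : bool :=
  [forall j : 'I_r, ((nat_of_ord j).+1 == r) ==> (t j < b)%N].

Definition W (R : comNzRingType) (x : nat -> R) (r : nat) (S : seq nat) (M b : nat) : R :=
  \sum_(t : {ffun 'I_r -> 'I_M} | valid S t && lastlt t b) \prod_(j < r) x (t j).+1.

Definition tn (r M : nat) (t : {ffun 'I_r -> 'I_M}) (i : nat) : nat :=
  if insub i is Some j then nat_of_ord (t j) else 0%N.

Lemma tnE r M (t : {ffun 'I_r -> 'I_M}) (j : 'I_r) : tn t j = t j.
Proof. by rewrite /tn valK. Qed.

Lemma validP r S M (t : {ffun 'I_r -> 'I_M}) :
  reflect (forall j, (j.+1 < r)%N -> (tn t j <= tn t j.+1)%N /\ (j.+1 \in S -> (tn t j < tn t j.+1)%N))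
          (valid S t).
Proof.
apply: (iffP forallP) => H.
- move=> j hj.
  have /forallP /(_ (Ordinal hj)) := H (Ordinal (ltnW hj)).
  rewrite /= eqxx /= => /andP[h1 h2].
  have e1 := tnE t (Ordinal (ltnW hj)); have e2 := tnE t (Ordinal hj); simpl in e1, e2.
  by rewrite e1 e2; split=> // hS; apply: (implyP h2).
- move=> j; apply/forallP => j'; apply/implyP => /eqP e.
  have hj : (j.+1 < r)%N by rewrite -e.
  have [h1 h2] := H j hj.
  have e1 := tnE t j; have e2 := tnE t j'.
  rewrite -e1 -e2 e h1 /=; apply/implyP; exact: h2.
Qed.

Lemma lastltP r M (t : {ffun 'I_r -> 'I_M}) b :
  reflect (forall j, j.+1 = r -> (tn t j < b)%N) (lastlt t b).
Proof.
apply: (iffP forallP) => H.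
- move=> j hj.
  have hj' : (j < r)%N by rewrite -hj.
  have := H (Ordinal hj'); rewrite /= hj eqxx /= => h.
  by have := tnE t (Ordinal hj'); simpl => ->.
- move=> j; apply/implyP => /eqP e.
  by rewrite -tnE; apply: H.
Qed.

Definition join (r M : nat) (t : {ffun 'I_r -> 'I_M}) (c : 'I_M) : {ffun 'I_r.+1 -> 'I_M} :=
  [ffun i => if unlift ord_max i is Some j then t j else c].

Definition splitf (r M : nat) (t : {ffun 'I_r.+1 -> 'I_M}) : 'I_M * {ffun 'I_r -> 'I_M} :=
  (t ord_max, [ffun j => t (lift ord_max j)]).

Lemma join_lift r M (t : {ffun 'I_r -> 'I_M}) c j : join t c (lift ord_max j) = t j.
Proof. by rewrite ffunE liftK. Qed.

Lemma join_max r M (t : {ffun 'I_r -> 'I_M}) c : join t c ord_max = c.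
Proof. by rewrite ffunE unlift_none. Qed.

Lemma tn_join r M (t : {ffun 'I_r -> 'I_M}) c i :
  tn (join t c) i = if (i < r)%N then tn t i else if i == r then nat_of_ord c else 0%N.
Proof.
case: (ltnP i r) => hi.
  have := tnE (join t c) (lift ord_max (Ordinal hi)); rewrite lift_max /= => ->.
  by rewrite join_lift; have := tnE t (Ordinal hi); simpl => ->.
case: eqP => [->|ne].
  by have := tnE (join t c) ord_max; simpl => ->; rewrite join_max.
rewrite /tn insubN //; apply/negP => h.
have : i = r by move: hi h ne; clear; lia.
by [].
Qed.

Lemma join_bij r M : bijective (fun p : 'I_M * {ffun 'I_r -> 'I_M} => join p.2 p.1).
Proof.
exists (@splitf r M).
- move=> [c t] /=; rewrite /splitf join_max; congr pair.
  by apply/ffunP => j; rewrite ffunE join_lift.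
- move=> t /=; apply/ffunP => i; rewrite ffunE /=.
  case: unliftP => [j ->|->]; first by rewrite ffunE.
  done.
Qed.

Lemma cond_join r S M (t : {ffun 'I_r -> 'I_M}) (c : 'I_M) b :
  valid S (join t c) && lastlt (join t c) b =
  (c < b)%N && (valid S t && lastlt t (if r \in S then nat_of_ord c else (nat_of_ord c).+1)).
Proof.
apply/idP/idP.
- case/andP => /validP H1 /lastltP H2.
  have cb : (c < b)%N by have := H2 r erefl; rewrite tn_join ltnn eqxx.
  rewrite cb /=; apply/andP; split.
    apply/validP => j hj.
    have := H1 j (ltnW hj); rewrite !tn_join hj (ltnW hj); done.
  apply/lastltP => j hj.
  have jr : (j < r)%N by rewrite -hj.
  have := H1 j; rewrite !tn_join jr; subst r; rewrite ltnn eqxx ltnSn.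
  case => // h1 h2; case: (j.+1 \in S) h2 => h2; last by [].
  by apply: h2.
- case/andP => cb /andP[/validP H1 /lastltP H2].
  apply/andP; split.
    apply/validP => j hj.
    rewrite !tn_join.
    case: (ltnP j.+1 r) => hj'.
      by rewrite (ltnW hj'); apply: H1.
    have ej : j.+1 = r by move: hj hj'; clear; lia.
    have := H2 j ej; subst r; rewrite ltnSn eqxx.
    case: (_ \in S) => h.
    + by split => [|_ //]; exact: ltnW.
    + by split => // /negP.
  apply/lastltP => j hj.
  by move: hj; case => ->; rewrite tn_join ltnn eqxx.
Qed.

Lemma W_rec (R : comNzRingType) (x : nat -> R) r S M b :
  W x r.+1 S M b = \sum_(c < M | (c < b)%N) W x r S M (if r \in S then nat_of_ord c else (nat_of_ord c).+1) * x (nat_of_ord c).+1.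
Proof.
under eq_bigr => c _ do rewrite /W big_distrl /=.
rewrite pair_big_dep /W (reindex _ (onW_bij _ (@join_bij r M))) /=.
apply: eq_big => [[c t]|[c t] _] /=; first by rewrite cond_join.
rewrite big_ord_recr /= join_max; congr (_ * _).
apply: eq_bigr => j _; congr (x _.+1).
have -> : widen_ord (leqnSn r) j = lift ord_max j.
  by apply: ord_inj; rewrite lift_max.
by rewrite join_lift.
Qed.

Lemma W_step (R : comNzRingType) (x : nat -> R) r S M b : (b < M)%N ->
  W x r.+1 S M b.+1 = W x r.+1 S M b + W x r S M (if r \in S then b else b.+1) * x b.+1.
Proof.
move=> bM; rewrite !W_rec (bigD1 (Ordinal bM)) //= addrC; congr (_ + _).
apply: eq_bigl => c; rewrite ltnS leq_eqVlt.
case: (ltnP c b) => h; rewrite ?orbT ?orbF.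
  by apply/negP => /eqP e; move: h; rewrite e ltnn.
apply/negP => /andP[/eqP e /eqP ne]; apply: ne; exact: ord_inj.
Qed.

Lemma W_zero (R : comNzRingType) (x : nat -> R) r S M : W x r.+1 S M 0 = 0.
Proof. by rewrite W_rec big_pred0. Qed.

Lemma W0 (R : comNzRingType) (x : nat -> R) S M b : W x 0 S M b = 1.
Proof.
rewrite /W (eq_bigl xpredT); last first.
  by move=> t; apply/andP; split; apply/forallP => -[].
under eq_bigr => t _ do rewrite big_ord0.
rewrite sumr_const card_ffun (card_ord 0) expn0 //.
Qed.

Lemma W_ext (R : comNzRingType) (x : nat -> R) r S S' M b :
  (forall j, (j < r)%N -> (j \in S) = (j \in S')) -> W x r S M b = W x r S' M b.
Proof.
move=> H; apply: eq_bigl => t; congr (_ && _).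
apply: eq_forallb => j; apply: eq_forallb => j'.
case: eqP => //= e; rewrite H // -e //.
Qed.

Lemma fundQS_W (R : comNzRingType) (alpha : seq nat) m (x : nat -> R) :
  fundQS alpha m x = W x (sumn alpha) (compSet alpha) m m.
Proof.
apply: eq_bigl => t; rewrite /valid /lastlt.
suff -> : [forall j : 'I_(sumn alpha), ((nat_of_ord j).+1 == sumn alpha) ==> (t j < m)%N] by rewrite andbT.
by apply/forallP => j; rewrite ltn_ord implybT.
Qed.

Definition D (R : comNzRingType) (u : int -> R) (L a : nat) : R :=
  \prod_(i < L) u (Posz (a + i)%N).

Lemma qint_neq0 (k : fieldType) (q : k) (hchar : [pchar k] =i pred0)
  (hq : forall n : nat, (0 < n)%N -> q ^+ n = 1 -> q = 1) n :
  qint q n.+1 != 0.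
Proof.
case: (eqVneq q 1) => [->|q1].
  rewrite /qint (eq_bigr (fun _ => 1)); last by move=> i _; rewrite expr1n.
  rewrite sumr_const card_ord.
  have /pcharf0P H : has_char0 k by [].
  by rewrite H.
apply/negP => /eqP h.
have := subrX1 q n.+1; rewrite -/(qint q n.+1) h mulr0 => /eqP; rewrite subr_eq0 => /eqP.
by move/(hq _ (ltn0Sn n)); move/eqP: q1.
Qed.

Lemma key (k : fieldType) (q : k) (A : comAlgType k) (u : int -> A)
  (hrel : forall i : int, (q + 1) *: (u i ^+ 2) = q *: (u i * u (i - 1)) + u i * u (i + 1))
  (L a0 : nat) :
  let P := D u L a0.+1 in
  let v := fun i : nat => P * u (Posz (a0 + i)%N) in
  forall i, (i < L)%N -> (q + 1) *: v i.+1 = q *: v i + v i.+2.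
Proof.
move=> P v i hi.
pose y := Posz (a0 + i.+1)%N.
pose P' := \prod_(j < L | j != Ordinal hi) u (Posz (a0.+1 + j)%N).
have eP : P = u y * P'.
  by rewrite /P /D (bigD1 (Ordinal hi)) //= /y addSnnS.
have e1 : Posz (a0 + i)%N = y - 1 by rewrite /y; lia.
have e2 : Posz (a0 + i.+2)%N = y + 1 by rewrite /y; lia.
rewrite /v eP -/y e1 e2.
have E : forall z, u y * P' * z = P' * (u y * z) by move=> z; rewrite mulrAC mulrC.
by rewrite !E -expr2 scalerAr hrel mulrDr -scalerAr.
Qed.

Lemma lem1 (k : fieldType) (q : k) (hchar : [pchar k] =i pred0)
  (hq : forall n : nat, (0 < n)%N -> q ^+ n = 1 -> q = 1)
  (A : comAlgType k) (u : int -> A)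
  (hrel : forall i : int, (q + 1) *: (u i ^+ 2) = q *: (u i * u (i - 1)) + u i * u (i + 1))
  (L a0 n : nat) : (n <= L)%N ->
  D u L a0.+1 * (u (Posz (a0 + n.+1)%N) - u (Posz (a0 + n)%N)) =
  (q ^+ n / qint q L.+1) *: (D u L.+1 a0.+1 - D u L.+1 a0).
Proof.
move=> hn.
pose P := D u L a0.+1.
pose v := fun i : nat => P * u (Posz (a0 + i)%N).
pose d := fun i : nat => v i.+1 - v i.
have hk := @key k q A u hrel L a0.
have dS : forall i, (i < L)%N -> d i.+1 = q *: d i.
  move=> i hi; rewrite /d.
  have := hk i hi; rewrite -/P -/v => h.
  have -> : v i.+2 = (q + 1) *: v i.+1 - q *: v i by rewrite h addrC addKr.
  by rewrite scalerDl scale1r scalerBr addrAC addrK.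
have dn : forall i, (i <= L)%N -> d i = q ^+ i *: d 0%N.
  elim=> [|i IH] hi; first by rewrite expr0 scale1r.
  by rewrite dS // IH ?(ltnW hi) // scalerA exprS.
have sum : \sum_(i < L.+1) d i = v L.+1 - v 0%N.
  elim: (L.+1) => [|j IH]; first by rewrite big_ord0 subrr.
  by rewrite big_ord_recr /= IH /d addrC addrA subrK.
have sum2 : \sum_(i < L.+1) d i = qint q L.+1 *: d 0%N.
  rewrite /qint scaler_suml; apply: eq_bigr => i _; apply: dn; rewrite -ltnS; exact: ltn_ord.
have eD1 : v L.+1 = D u L.+1 a0.+1.
  by rewrite /v /P /D big_ord_recr /= addSnnS.
have eD0 : v 0%N = D u L.+1 a0.
  rewrite /v /P /D big_ord_recl /= addn0 mulrC; congr (_ * _).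
  by apply: eq_bigr => i _; rewrite addSnnS.
have e0 : d 0%N = (qint q L.+1)^-1 *: (v L.+1 - v 0%N).
  by rewrite -sum sum2 scalerA mulVf ?scale1r // qint_neq0.
have -> : D u L a0.+1 * (u (Posz (a0 + n.+1)%N) - u (Posz (a0 + n)%N)) = d n by rewrite /d /v mulrBr.
by rewrite dn // e0 scalerA eD1 eD0.
Qed.

Lemma compSet_rcons (b : seq nat) s :
  compSet (rcons b s) = [seq sumn (take i b) | i <- iota 1 (size b)].
Proof.
rewrite /compSet size_rcons /=; apply/eq_in_map => i.
rewrite mem_iota => /andP[_ hi].
rewrite -cats1 takel_cat //; move: hi; clear; lia.
Qed.

Lemma sumn_take_le (s : seq nat) i : (sumn (take i s) <= sumn s)%N.
Proof. by rewrite -{2}(cat_take_drop i s) sumn_cat leq_addr. Qed.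

Lemma comp_size (s : seq nat) : is_composition s -> (size s <= sumn s)%N.
Proof.
elim: s => //= a s IH /andP[ha hs]; have := IH hs; move: ha; clear; lia.
Qed.

Lemma nstat_rcons (b : seq nat) s : nstat (rcons b s) = (nstat b + size b * s)%N.
Proof.
rewrite /nstat size_rcons big_ord_recr /= nth_rcons ltnn eqxx; congr (_ + _)%N.
apply: eq_bigr => i _; rewrite /= nth_rcons ltn_ord //.
Qed.

Lemma compSet_rcons1 (b : seq nat) : b != [::] ->
  compSet (rcons b 1%N) = rcons (compSet b) (sumn b).
Proof.
case/lastP: b => [//|b' z] _.
rewrite compSet_rcons [compSet (rcons b' z)]compSet_rcons size_rcons.
have -> : iota 1 (size b').+1 = rcons (iota 1 (size b')) (size b').+1.
  by rewrite -cats1 -(addn1 (size b')) iotaD addnC.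
rewrite map_rcons -(size_rcons b' z) take_size; congr rcons.
apply/eq_in_map => i; rewrite mem_iota => /andP[_ hi].
rewrite -cats1 takel_cat //; move: hi; clear; lia.
Qed.

Lemma r_notin (b : seq nat) s : (1 < s)%N -> (sumn b + s).-1 \notin compSet (rcons b s).
Proof.
move=> hs; rewrite compSet_rcons; apply/mapP => -[i _ e].
have := sumn_take_le b i; rewrite -e; move: hs; clear; lia.
Qed.

Definition closed (k : fieldType) (q : k) (A : comAlgType k) (u : int -> A) (al : seq nat) (b : nat) : A :=
  if (size al <= b)%N then (q ^+ nstat al / qfact q (sumn al)) *: D u (sumn al) (b - size al).+1 else 0.

Lemma udiffS (R : comNzRingType) (u : int -> R) (u0 : u 0 = 0) i :
  udiff u i.+1 = u (Posz i.+1) - u (Posz i).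
Proof.
rewrite /udiff; case: i => [|i] /=; first by rewrite u0 subr0.
by congr (_ - u _); lia.
Qed.

Lemma D0 (R : comNzRingType) (u : int -> R) (u0 : u 0 = 0) L : D u L.+1 0 = 0.
Proof. by rewrite /D big_ord_recl /= u0 mul0r. Qed.

Lemma closed_nil (k : fieldType) (q : k) (A : comAlgType k) (u : int -> A) b : closed q u [::] b = 1.
Proof.
rewrite /closed /= /nstat /qfact /D !big_ord0 expr0 invr1 mulr1 scale1r //.
Qed.

Lemma predW (k : fieldType) (q : k) (A : comAlgType k) (u : int -> A) (M r : nat)
  (IH : forall al, sumn al = r -> is_composition al -> forall b, (b <= M)%N ->
        W (udiff u) r (compSet al) M b = closed q u al b)
  (be : seq nat) (s b : nat) (hs : (0 < s)%N) (hbe : is_composition be)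
  (hsum : (sumn be + s)%N = r.+1) (hb : (b.+1 <= M)%N) :
  let S := compSet (rcons be s) in
  W (udiff u) r S M (if r \in S then b else b.+1) =
  if (size be <= b)%N then (q ^+ (nstat (rcons be s) - size be) / qfact q r) *: D u r (b - size be).+1 else 0.
Proof.
move=> S; rewrite /S; clear S; case: s hs hsum => [//|[|s2]] _ hsum.
- case: (eqVneq be [::]) => [ebe|hne].
    subst be; have <- : 0%N = r by move: hsum; rewrite /=; clear; lia.
    rewrite W0 /= /nstat /qfact /D !big_ord0 big_ord_recr big_ord0 /= mul0n expr0 invr1 mulr1 scale1r //.
  have er : r = sumn be by move: hsum; clear; lia.
  rewrite compSet_rcons1 // mem_rcons in_cons -er eqxx /=.
  rewrite (W_ext _ _ (S' := compSet be)); last first.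
    by move=> j hj; rewrite mem_rcons in_cons ltn_eqF.
  rewrite (IH be (esym er) hbe b (ltnW hb)) /closed -er nstat_rcons muln1 addnK //.
- have er : r = (sumn be + s2.+2).-1 by move: hsum; clear; lia.
  have hni := r_notin be (ltn0Sn s2.+1 : (1 < s2.+2)%N).
  rewrite -er in hni; rewrite (negbTE hni).
  have -> : compSet (rcons be s2.+2) = compSet (rcons be s2.+1) by rewrite !compSet_rcons.
  have hs' : sumn (rcons be s2.+1) = r by rewrite sumn_rcons; move: hsum; clear; lia.
  have hc : is_composition (rcons be s2.+1) by rewrite /is_composition all_rcons.
  rewrite (IH _ hs' hc _ hb) /closed hs' size_rcons ltnS subSS !nstat_rcons.
  case: (size be <= b)%N => //.
  congr ((q ^+ _ / _) *: _); clear; lia.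
Qed.

Lemma mainW (k : fieldType) (q : k)
  (hchar : [pchar k] =i pred0)
  (hq : forall n : nat, (0 < n)%N -> q ^+ n = 1 -> q = 1)
  (A : comAlgType k) (u : int -> A) (hu : klyachko_plus q u) (M : nat) :
  forall n al, sumn al = n -> is_composition al -> forall b, (b <= M)%N ->
  W (udiff u) n (compSet al) M b = closed q u al b.
Proof.
have u0 : u 0 = 0 by apply: hu.2.
elim=> [|r IH] al.
  case: al => [|a al] /=; first by move=> _ _ b _; rewrite W0 closed_nil.
  by move=> h /andP[ha _]; move: h ha; clear; lia.
case/lastP: al => [//|be s] hsum.
rewrite /is_composition all_rcons => /andP[hs hbe].
rewrite sumn_rcons in hsum.
elim=> [|b IHb] hb.
  by rewrite W_zero /closed size_rcons ltn0.
rewrite W_step // IHb ?(ltnW hb) // (predW IH hs hbe hsum hb) /closed size_rcons !ltnS.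
have hkr : (size be <= r)%N.
  have := @comp_size (rcons be s); rewrite /is_composition all_rcons hs hbe size_rcons sumn_rcons.
  move=> /(_ isT); rewrite hsum; clear; lia.
case: (leqP (size be) b) => hkb; last first.
  by rewrite leqNgt (leq_trans hkb (leqnSn _)) /= mul0r addr0.
rewrite udiffS //.
set a0 := (b - size be)%N.
have eb : b = (a0 + size be)%N by rewrite /a0 subnK.
have eD : (if (size be < b)%N then (q ^+ nstat (rcons be s) / qfact q (sumn (rcons be s))) *: D u (sumn (rcons be s)) (b - (size be).+1).+1 else 0) = (q ^+ nstat (rcons be s) / qfact q (sumn (rcons be s))) *: D u r.+1 a0.
  rewrite sumn_rcons hsum; case: ltnP => h.
    by congr (_ *: D u _ _); rewrite /a0; move: h; clear; lia.
  have -> : a0 = 0%N by rewrite /a0; move: h hkb; clear; lia.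
  by rewrite D0 // scaler0.
rewrite eD subSS -/a0 sumn_rcons hsum.
rewrite eb -addnS -scalerAl (lem1 hchar hq (u := u) hu.1 a0 hkr) scalerA.
set e := (nstat (rcons be s) - size be)%N.
have ee : nstat (rcons be s) = (e + size be)%N.
  rewrite /e nstat_rcons subnK //; move: hs; clear; nia.
have -> : q ^+ e / qfact q r * (q ^+ size be / qint q r.+1) = q ^+ nstat (rcons be s) / qfact q r.+1.
  by rewrite ee exprD /qfact big_ord_recr /= invfM mulrACA.
by rewrite scalerBr addrC subrK.
Qed.

Unset Implicit Arguments. Set Strict Implicit.

Lemma D_uint (R : comNzRingType) (u : int -> R) r a : D u r a.+1 = uint u a.+1 (a + r).
Proof.
rewrite /uint /D.
have := @big_addn R 1 *%R 0 (a.+1 + r) a.+1 xpredT (fun j => u (Posz j)).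
rewrite add0n => ->; rewrite addKn big_mkord.
by apply: eq_bigr => i _; rewrite addnC.
Qed.

Theorem mainTheorem12 (k : fieldType) (q : k)
  (hchar : [pchar k] =i pred0)
  (hq : forall n : nat, (0 < n)%N -> q ^+ n = 1 -> q = 1)
  (A : comAlgType k) (u : int -> A) (hu : klyachko_plus q u)
  (alpha : seq nat) (m : nat)
  (halpha : is_composition alpha) (hm : (size alpha <= m)%N) :
  fundQS alpha m (udiff u) =
  (q ^+ nstat alpha / qfact q (sumn alpha))
    *: uint u (1 + m - size alpha) (sumn alpha + m - size alpha).
Proof.
rewrite fundQS_W (mainW hchar hq hu erefl halpha (leqnn m)) /closed hm D_uint.
congr (_ *: uint u _ _); move: hm; clear; lia.
Qed.
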